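(* Let $P\subset\mathbb{R}^n$ be a pointed polyhedral set of dimension $n$. Then the base map $\mathrm{base}_P:P\to K_P$ is continuous.
   Context: For a polyhedral set $P$, $\mathrm{char.cone}(P)=\{y:x+y\in P\ \forall x\in P\}$; $P$ is pointed if $\mathrm{char.cone}(P)\cap-\mathrm{char.cone}(P)=\{0\}$. $K_P$ is the convex hull of the vertices of $P$. For $p\in P$, $\mathrm{base}_P(p)$ is the unique point $x\in K_P$ with $p-x\in\mathrm{char.cone}(P)$ minimizing $|p-x|$ among all such points (existence and uniqueness hold for pointed $P$). *)

(* Defs.v *)
(* Vectors of R^n are column vectors 'cV[R]_n,
   with the topology MathComp-Analysis puts on matrices (product topology). *)
From HB Require Import structures.
From mathcomp Require Import all_boot all_order all_algebra.
From mathcomp Require Import all_classical all_reals all_analysis.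
Set Implicit Arguments. Unset Strict Implicit. Unset Printing Implicit Defensive.
Import Order.TTheory GRing.Theory Num.Theory.
Local Open Scope ring_scope.
Local Open Scope classical_set_scope.

Section Polyhedra.
Variables (R : realType) (n : nat).
Implicit Types (P : set 'cV[R]_n) (x y p : 'cV[R]_n).

Definition enorm (v : 'cV[R]_n) : R := Num.sqrt (\sum_(i < n) v i 0 ^+ 2).

Definition polyhedron (m : nat) (A : 'M[R]_(m, n)) (b : 'cV[R]_m) : set 'cV[R]_n :=
  [set x | forall i : 'I_m, (A *m x) i 0 <= b i 0].

Definition polyhedral P : Prop :=
  exists (m : nat) (A : 'M[R]_(m, n)) (b : 'cV[R]_m), P = polyhedron A b.

Definition char_cone P : set 'cV[R]_n := [set y | forall x, P x -> P (x + y)].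

Definition pointed P : Prop :=
  forall y, char_cone P y -> char_cone P (- y) -> y = 0.

Definition vertex P x : Prop :=
  P x /\ forall y z (t : R), P y -> P z -> 0 < t < 1 ->
    x = t *: y + (1 - t) *: z -> y = z.

Definition conv_hull (S : set 'cV[R]_n) : set 'cV[R]_n :=
  [set x | exists (k : nat) (v : 'I_k -> 'cV[R]_n) (l : 'I_k -> R),
     (forall i, S (v i)) /\ (forall i, 0 <= l i) /\ \sum_(i < k) l i = 1 /\
     x = \sum_(i < k) l i *: v i].

Definition aff_hull (S : set 'cV[R]_n) : set 'cV[R]_n :=
  [set x | exists (k : nat) (v : 'I_k -> 'cV[R]_n) (l : 'I_k -> R),
     (forall i, S (v i)) /\ \sum_(i < k) l i = 1 /\
     x = \sum_(i < k) l i *: v i].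

Definition full_dim P : Prop := aff_hull P = setT.

Definition KP P : set 'cV[R]_n := conv_hull (vertex P).

Definition is_base P p x : Prop :=
  KP P x /\ char_cone P (p - x) /\
  forall y, KP P y -> char_cone P (p - y) -> enorm (p - x) <= enorm (p - y).

(* base_P(p): the (unique, for pointed P) such point, chosen classically *)
Definition base P p : 'cV[R]_n := xget 0 [set x | is_base P p x].

End Polyhedra.

(* Main.v *)
Require Import Defs.
From HB Require Import structures.
From mathcomp Require Import all_boot all_order all_algebra.
From mathcomp Require Import all_classical all_reals all_analysis.
From mathcomp Require Import ring lra.
Import Order.TTheory GRing.Theory Num.Theory.
Import numFieldNormedType.Exports.
Local Open Scope ring_scope.
Local Open Scope classical_set_scope.

Lemma entry_le_norm (R : realType) p q (x : 'M[R]_(p, q)) i j : `|x i j| <= `|x|.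
Proof.
change (`|x i j| <= mx_norm x); rewrite mx_normrE.
exact: (le_bigmax _ (fun ij : 'I_p * 'I_q => `|x ij.1 ij.2|) (i, j)).
Qed.

Lemma norm_le_entries (R : realType) p q (x : 'M[R]_(p, q)) M :
  0 <= M -> (forall i j, `|x i j| <= M) -> `|x| <= M.
Proof.
move=> M0 h; change (mx_norm x <= M); rewrite mx_normrE.
by apply: bigmax_le => // ij _; exact: h.
Qed.

Lemma conv_eq {R : realType} {t a c B : R} : 0 < t < 1 -> a <= B -> c <= B ->
  t * a + (1 - t) * c = B -> a = B.
Proof.
move=> /andP[t0 t1] aB cB e; apply/eqP; rewrite eq_le aB /=.
rewrite leNgt; apply/negP => lt.
have : t * a + (1 - t) * c < B; last by rewrite e ltxx.
have -> : B = t * B + (1 - t) * B by ring.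
by rewrite ltr_leD // ?ltr_pM2l // ler_wpM2l // subr_ge0 ltW.
Qed.

Lemma cluster_sub_cvg {T : topologicalType} (x : T) F V :
  hausdorff_space T -> compact V ->
  ProperFilter F -> F V -> cluster F `<=` [set x] -> F --> x.
Proof.
move=> ? cptV PF FV clFx1 U nbhsU; rewrite nbhs_simpl.
wlog oU : U nbhsU / open U.
  rewrite /= nbhsE in nbhsU; case: nbhsU => O oO OsubU /(_ O) WH.
  by apply: (filterS OsubU); apply: WH; [exact: open_nbhs_nbhs | by case: oO].
have /compact_near_coveringP : compact (V `\` U).
  apply: (subclosed_compact _ cptV) => //.
  by apply: closedI; [exact: compact_closed | exact: open_closedC].
move=> /(_ _ (powerset_filter_from F) (fun W x => ~ W x))[].
  move=> z [Vz ?]; have zE : x <> z by move/nbhs_singleton: nbhsU => /[swap] ->.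
  have : ~ cluster F z by move: zE; apply: contra_not => /clFx1 ->.
  case/existsNP=> C /existsPNP [D] FC /existsNP [Dz] /nonemptyPn.
  rewrite setIC => /disjoints_subset CD0; exists (D, [set W | F W /\ W `<=` C]).
    by split; rewrite //= nbhs_simpl; exact: powerset_filter_fromP.
  by case => t W [Dt] [FW] /subsetCP; apply; apply: CD0.
move=> M [MF ME2 [W] MW /(_ _ MW) VUW].
apply: (@filterS _ _ _ (V `&` W)); last by apply: filterI => //; exact: MF.
by move=> t [Vt Wt]; apply: contrapT => Ut; exact: (VUW t).
Qed.

Lemma cont_eps {R : realType} {T : pseudoMetricNormedZmodType R} (f : T -> R) u e :
  continuous f -> 0 < e -> exists2 d, 0 < d & forall v, `|v - u| < d -> `|f v - f u| < e.
Proof.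
move=> cf e0; have := cf u (ball (f u) e) (nbhsx_ballx _ _ e0).
move=> /nbhs_ballP [d d0 hd]; exists d => // v hv.
have : ball u d v by rewrite -ball_normE /= distrC.
by move/hd; rewrite -ball_normE /= distrC.
Qed.

Section Basics.
Variables (R : realType) (n m : nat) (A : 'M[R]_(m, n)) (b : 'cV[R]_m).
Local Notation P := (polyhedron A b).
Local Notation C := (char_cone P).

Definition ax i (x : 'cV[R]_n) := (A *m x) i 0.

Lemma axD i x y : ax i (x + y) = ax i x + ax i y.
Proof. by rewrite /ax mulmxDr mxE. Qed.
Lemma axZ i t x : ax i (t *: x) = t * ax i x.
Proof. by rewrite /ax -scalemxAr mxE. Qed.
Lemma axN i x : ax i (- x) = - ax i x.
Proof. by rewrite /ax mulmxN mxE. Qed.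
Lemma axB i x y : ax i (x - y) = ax i x - ax i y.
Proof. by rewrite axD axN. Qed.
Lemma ax0 i : ax i 0 = 0.
Proof. by rewrite /ax mulmx0 mxE. Qed.

Lemma P_conv x y t : P x -> P y -> 0 <= t <= 1 -> P (t *: x + (1 - t) *: y).
Proof.
move=> Px Py /andP[t0 t1] i; rewrite -/(ax i _) axD !axZ.
have := Px i; have := Py i; rewrite -/(ax i x) -/(ax i y) => hy hx.
have -> : b i 0 = t * b i 0 + (1 - t) * b i 0 by ring.
by rewrite lerD // ler_wpM2l // subr_ge0.
Qed.

Lemma C_of y : (forall i, ax i y <= 0) -> C y.
Proof.
move=> hy x Px i; rewrite -/(ax i _) axD.
by rewrite -[b i 0]addr0 lerD // ?hy //; exact: Px.
Qed.

Lemma C_add y z : C y -> C z -> C (y + z).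
Proof. by move=> hy hz x Px; rewrite addrA; apply/hz/hy. Qed.

Lemma C_conv y z t : C y -> C z -> 0 <= t <= 1 -> C (t *: y + (1 - t) *: z).
Proof.
move=> hy hz ht x Px.
have -> : x + (t *: y + (1 - t) *: z) = t *: (x + y) + (1 - t) *: (x + z).
  by rewrite !scalerDr addrACA -scalerDl (addrC t) subrK scale1r.
by apply: P_conv => //; [apply: hy | apply: hz].
Qed.

Lemma C0 : C 0.
Proof. by move=> x Px; rewrite addr0. Qed.

Lemma ax_cont i : continuous (ax i).
Proof.
have -> : ax i = fun x => \sum_(j < n) A i j * x j 0.
  by apply/funext => x; rewrite /ax mxE.
apply: continuous_big => [|j _]; first exact: (@add_continuous R^o).
move=> x; apply: (@continuousM _ _ (cst (A i j)) (fun x : 'cV[R]_n => x j 0)).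
  exact: cst_continuous.
exact: (@coord_continuous _ n 1 j 0).
Qed.

Lemma P_closed : closed P.
Proof.
have -> : P = \bigcap_(i in [set: 'I_m]) (ax i @^-1` [set r | r <= b i 0]).
  by apply/seteqP; split => x /= h i; [move=> _; exact: h | exact: h].
apply: closed_bigI => i _; apply: preimage_closed; last exact: closed_le.
by move=> x _; exact: ax_cont.
Qed.

Lemma C_closed : closed C.
Proof.
have -> : C = \bigcap_(x in P) ((fun y => x + y) @^-1` P).
  by apply/seteqP; split => y /= h x Px; exact: h.
apply: closed_bigI => x _; apply: preimage_closed; last exact: P_closed.
move=> y _; apply: continuousD; [exact: cst_continuous | exact: cvg_id].
Qed.

Lemma small_t {I : finType} (c s : I -> R) :
  (forall i, 0 <= s i) -> (forall i, 0 < c i -> 0 < s i) ->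
  exists2 t, 0 < t & t <= 1 /\ forall i, t * c i <= s i.
Proof.
move=> s0 cs.
have mono t t' i : 0 < t -> t <= t' -> t' * c i <= s i -> t * c i <= s i.
  move=> t0 tt' h; have [ci0|ci0] := leP 0 (c i).
    exact: le_trans (ler_wpM2r ci0 tt') h.
  by apply: le_trans (s0 i); rewrite pmulr_rle0 // ltW.
suff [t t0 [t1 ht]] : exists2 t, 0 < t & t <= 1 /\ forall i, i \in enum I -> t * c i <= s i.
  by exists t => //; split => // i; apply: ht; rewrite mem_enum.
elim: (enum I) => [|i r [t' t'0 [t'1 ht']]]; first by exists 1 => //; split.
have [ci0|ci0] := leP (c i) 0.
  exists t' => //; split => // j; rewrite inE => /orP[/eqP->|jr]; last exact: ht'.
  by apply: le_trans (s0 i); rewrite pmulr_rle0.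
have si0 := cs i ci0.
exists (Num.min t' (s i / c i)).
  by rewrite lt_min t'0 divr_gt0.
split; first by rewrite ge_min t'1.
move=> j; rewrite inE => /orP[/eqP->|jr].
  apply: (@mono _ (s i / c i)); first by rewrite lt_min t'0 divr_gt0.
    by rewrite ge_min lexx orbT.
  by rewrite divfK // gt_eqF.
apply: (@mono _ t'); first by rewrite lt_min t'0 divr_gt0.
  by rewrite ge_min lexx.
exact: ht'.
Qed.

Lemma vertex_act x y : vertex P x -> P y ->
  (forall i, ax i x = b i 0 -> ax i y = b i 0) -> x = y.
Proof.
move=> [Px vx] Py hact.
have h1 : forall i, 0 <= b i 0 - ax i x by move=> i; rewrite subr_ge0; exact: Px.
have h2 : forall i, 0 < ax i x - ax i y -> 0 < b i 0 - ax i x.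
  move=> i /=; rewrite subr_gt0 => hlt; rewrite subr_gt0 lt_neqAle (Px i) andbT.
  apply/eqP => e; have := hact i e; rewrite -e => e2.
  by rewrite e2 ltxx in hlt.
have [t t0 [t1 ht]] := @small_t _ _ _ h1 h2.
pose z1 := x + t *: (x - y); pose z2 := (1 - t) *: x + (1 - (1 - t)) *: y.
have Pz1 : P z1.
  move=> i; rewrite -/(ax i _) axD axZ axB.
  have := ht i; rewrite /= lerBrDr => h; by rewrite addrC.
have Pz2 : P z2 by apply: P_conv => //; rewrite subr_ge0 t1 lerBlDr lerDl ltW.
have hx : x = 2^-1 *: z1 + (1 - 2^-1) *: z2.
  rewrite /z1 /z2; apply/matrixP => i j; rewrite !mxE.
  by field; rewrite ?pnatr_eq0.
have h12 : 0 < (2^-1 : R) < 1 by rewrite invr_gt0 ltr0n /= invf_lt1 ?ltr0n // ltr1n.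
have := vx z1 z2 (2^-1) Pz1 Pz2 h12 hx.
rewrite /z1 /z2 => e.
have : t *: (x - y) = 0.
  apply/matrixP => i j; move/matrixP: e => /(_ i j); rewrite !mxE => e.
  have -> : t * (x i j - y i j) = ((x i j + t * (x i j - y i j)) -
     ((1 - t) * x i j + (1 - (1 - t)) * y i j)) / 2 by field; rewrite ?pnatr_eq0.
  by rewrite e subrr mul0r.
by move/eqP; rewrite scaler_eq0 gt_eqF //= subr_eq0 => /eqP.
Qed.

Definition act x : {set 'I_m} := [set i | ax i x == b i 0].
Definition wI (J : {set 'I_m}) := xget 0 [set x | vertex P x /\ act x = J].
Definition VS : seq 'cV[R]_n :=
  [seq wI J | J <- enum {set 'I_m} & `[< exists x, vertex P x /\ act x = J >]].

Lemma VS_vertex y : y \in VS -> vertex P y.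
Proof.
case/mapP => J; rewrite mem_filter => /andP[/asboolP ex _] ->.
by have [] := xgetPex 0 ex.
Qed.

Lemma vertex_VS x : vertex P x -> x \in VS.
Proof.
move=> vx; have ex : exists y, vertex P y /\ act y = act x by exists x.
have [vw aw] := xgetPex 0 ex.
have -> : x = wI (act x).
  apply: vertex_act => //; first by case: vw.
  move=> i e; have : i \in act (wI (act x)) by rewrite /wI aw inE e.
  by rewrite inE => /eqP.
by apply: map_f; rewrite mem_filter mem_enum andbT; apply/asboolP.
Qed.

Definition NV := size VS.
Definition vv (j : 'I_NV) := nth 0 VS j.
Definition Delta := [set l : 'rV[R]_NV | (forall j, 0 <= l 0 j) /\ \sum_j l 0 j = 1].
Definition fK (l : 'rV[R]_NV) := \sum_j l 0 j *: vv j.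

Lemma vv_vertex j : vertex P (vv j).
Proof. by apply: VS_vertex; rewrite /vv mem_nth. Qed.

Lemma KP_eq : KP P = fK @` Delta.
Proof.
apply/seteqP; split => x.
  move=> [k [v [l [vV [l0 [l1 ->]]]]]].
  have iN i : (index (v i) VS < NV)%N by rewrite index_mem; apply: vertex_VS.
  pose lam := \row_(j < NV) \sum_(i < k | index (v i) VS == j) l i.
  exists lam.
    split => [j|]; first by rewrite mxE; apply: sumr_ge0 => i _.
    under eq_bigr do rewrite mxE.
    rewrite -l1 (exchange_big_dep xpredT) //=; apply: eq_bigr => i _.
    by rewrite (big_pred1 (Ordinal (iN i))) // => j; rewrite /= eq_sym.
  rewrite /fK; under eq_bigr do rewrite mxE scaler_suml.
  rewrite (exchange_big_dep xpredT) //=; apply: eq_bigr => i _.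
  rewrite (big_pred1 (Ordinal (iN i))); last by move=> j; rewrite /= eq_sym.
  by rewrite /vv /= nth_index //; apply: vertex_VS.
move=> [l [l0 l1] <-]; exists NV, vv, (fun j => l 0 j).
by split; [exact: vv_vertex | split].
Qed.

Lemma Delta_compact : compact Delta.
Proof.
apply: bounded_closed_compact.
  exists 1; split => // M M1 l [l0 l1] /=.
  apply: le_trans (ltW M1); apply: norm_le_entries => // i j.
  rewrite (ord1 i) ger0_norm // -l1 (bigD1 j) //= lerDl.
  by apply: sumr_ge0 => k _.
have -> : Delta = (\bigcap_(j in [set: 'I_NV]) ((fun l : 'rV[R]_NV => l 0 j) @^-1` [set r | 0 <= r]))
   `&` ((fun l : 'rV[R]_NV => \sum_j l 0 j) @^-1` [set r | r = 1]).
  apply/seteqP; split => l /=; first by move=> [h1 h2]; split => // j _; exact: h1.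
  by move=> [h1 h2]; split => // j; exact: h1.
apply: closedI.
  apply: closed_bigI => j _; apply: preimage_closed; last exact: closed_ge.
  by move=> l _; exact: (@coord_continuous _ 1 NV 0 j).
apply: preimage_closed; last exact: closed_eq.
move=> l _; apply: (continuous_big (op := +%R)) => [|j _]; first exact: (@add_continuous R^o).
exact: (@coord_continuous _ 1 NV 0 j).
Qed.

Lemma fK_cont : continuous fK.
Proof.
apply: continuous_big => [|j _]; first exact: add_continuous.
move=> l; apply: continuousZr_tmp; exact: (@coord_continuous _ 1 NV 0 j).
Qed.

Lemma K_compact : compact (KP P).
Proof.
rewrite KP_eq; apply: continuous_compact; last exact: Delta_compact.
exact/continuous_subspaceT/fK_cont.
Qed.

Lemma K_closed : closed (KP P).
Proof. apply: compact_closed; [exact: norm_hausdorff | exact: K_compact]. Qed.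

Lemma fK_conv l l' t : fK (t *: l + (1 - t) *: l') = t *: fK l + (1 - t) *: fK l'.
Proof.
rewrite /fK !scaler_sumr -big_split /=; apply: eq_bigr => j _.
by rewrite !mxE !scalerA -scalerDl.
Qed.

Lemma K_conv x y t : KP P x -> KP P y -> 0 <= t <= 1 -> KP P (t *: x + (1 - t) *: y).
Proof.
rewrite KP_eq => -[l [l0 l1] <-] [l' [l0' l1'] <-] /andP[t0 t1].
exists (t *: l + (1 - t) *: l'); last exact: fK_conv.
split => [j|]; first by rewrite !mxE addr_ge0 // mulr_ge0 // subr_ge0.
under eq_bigr do rewrite !mxE.
by rewrite big_split /= -!mulr_sumr l1 l1' !mulr1 subrKC.
Qed.

Definition Mb := \sum_j `|vv j|.

Lemma K_bound x : KP P x -> `|x| <= Mb.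
Proof.
rewrite KP_eq => -[l [l0 l1] <-]; apply: le_trans (ler_norm_sum _ _ _) _.
apply: ler_sum => j _; rewrite normrZ ger0_norm // ler_piMl //.
by rewrite -l1 (bigD1 j) //= lerDl; apply: sumr_ge0 => k _.
Qed.

Lemma vertex_K x : vertex P x -> KP P x.
Proof.
move=> vx; exists 1%N, (fun=> x), (fun=> 1); split => // ; split => //.
by rewrite big_ord1; split => //; rewrite big_ord1 scale1r.
Qed.

Definition inact x : {set 'I_m} := [set i | ax i x != b i 0].
Definition goalK q := exists x, KP P x /\ C (q - x).

Lemma move_ray p d : P p -> (forall i, ax i p = b i 0 -> ax i d = 0) ->
  (exists j, 0 < ax j d) ->
  exists s, 0 < s /\ P (p + s *: d) /\ (#|inact (p + s *: d)| < #|inact p|)%N.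
Proof.
move=> Pp hd [j0 hj0].
pose ratio j := (b j 0 - ax j p) / ax j d.
have [jm jpos jmin] : exists2 jm, 0 < ax jm d & forall j, 0 < ax j d -> ratio jm <= ratio j.
  case: (@arg_minP _ _ _ j0 (fun j => 0 < ax j d) ratio hj0) => jm jpos jmin.
  by exists jm => // j /jmin.
have slack j : 0 < ax j d -> 0 < b j 0 - ax j p.
  move=> hj; rewrite subr_gt0 lt_neqAle (Pp j) andbT; apply/eqP => e.
  by rewrite (hd j e) ltxx in hj.
exists (ratio jm); split; first by rewrite divr_gt0 // slack.
split.
  move=> i; rewrite -/(ax i _) axD axZ.
  have [hi|hi] := leP (ax i d) 0.
    apply: le_trans (Pp i); rewrite -/(ax i p) gerDl mulr_ge0_le0 //.
    by rewrite ltW // divr_gt0 // slack.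
  rewrite -lerBrDl; apply: le_trans (ler_wpM2r (ltW hi) (jmin i hi)) _.
  by rewrite /ratio divfK // gt_eqF.
have sub : inact (p + ratio jm *: d) \subset inact p :\ jm.
  apply/fintype.subsetP => i; rewrite !inE axD axZ => ne; apply/andP; split.
    have nz : ax jm d != 0 by rewrite gt_eqF.
    by apply/eqP => e; move: ne; rewrite e /ratio divfK // addrC subrK eqxx.
  by apply: contra ne => /eqP e; rewrite (hd i e) mulr0 addr0 e.
have jin : jm \in inact p.
  rewrite inE; apply/eqP => e; have := hd jm e; move: jpos => /[swap] ->.
  by rewrite ltxx.
apply: leq_ltn_trans (subset_leq_card sub) _.
by rewrite (cardsD1 jm (inact p)) jin add1n ltnSn.
Qed.

Lemma one_side p e :
  (forall q, P q -> (#|inact q| < #|inact p|)%N -> goalK q) ->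
  P p -> (forall i, ax i p = b i 0 -> ax i e = 0) ->
  (exists j, 0 < ax j e) -> (forall j, 0 <= ax j e) -> goalK p.
Proof.
move=> IH Pp he ex pos.
have [s [s0 [P1 lt1]]] := @move_ray p e Pp he ex.
have [x1 [Kx1 Cx1]] := IH _ P1 lt1.
exists x1; split => //.
have -> : p - x1 = (p + s *: e - x1) + s *: (- e).
  by rewrite scalerN addrAC addrK.
apply: C_add => //; apply: C_of => i; rewrite axZ axN mulrN oppr_le0.
by rewrite mulr_ge0 // ltW.
Qed.

Lemma minkowski : pointed P -> forall p, P p -> goalK p.
Proof.
move=> ptd p; move Hk : #|inact p| => k; elim/ltn_ind: k p Hk => k IHk p Hk Pp.
have IH q : P q -> (#|inact q| < #|inact p|)%N -> goalK q.
  by move=> Pq; rewrite Hk => lt; exact: (IHk _ lt q erefl Pq).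
have [vp|nvp] := pselect (vertex P p).
  by exists p; split; [exact: vertex_K | rewrite subrr; exact: C0].
have [y [z [t [Py [Pz [ht [ep nyz]]]]]]] :
    exists y z t, P y /\ P z /\ 0 < t < 1 /\ p = t *: y + (1 - t) *: z /\ y <> z.
  apply: contrapT => H; apply: nvp; split => // y z t Py Pz ht e.
  by apply: contrapT => ne; apply: H; exists y, z, t.
pose d := y - z.
have hd i : ax i p = b i 0 -> ax i d = 0.
  move=> e; have e' := e; rewrite ep axD !axZ in e'.
  have ey := conv_eq ht (Py i) (Pz i) e'.
  have ht' : 0 < 1 - t < 1 by case/andP: ht => t0 t1; rewrite subr_gt0 t1 /= gtrBl t0.
  have ez : ax i z = b i 0.
    by apply: (conv_eq ht' (Pz i) (Py i)); rewrite -e' /ax; ring.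
  by rewrite /d axB /ax ey; rewrite /ax in ez; rewrite ez subrr.
have hdN i : ax i p = b i 0 -> ax i (- d) = 0 by move=> e; rewrite axN hd // oppr0.
have [[j1 hj1]|npos] := pselect (exists j, 0 < ax j d); last first.
  have npos' j : ax j d <= 0 by rewrite leNgt; apply/negP => h; apply: npos; exists j.
  have [[j2 hj2]|nneg] := pselect (exists j, ax j d < 0); last first.
    have d0 j : ax j d = 0.
      apply/eqP; rewrite eq_le npos' leNgt; apply/negP => h; apply: nneg; exists j.
      done.
    exfalso; apply: nyz; apply/eqP; rewrite -subr_eq0; apply/eqP; apply: ptd.
      by apply: C_of => j; rewrite d0.
    by apply: C_of => j; rewrite axN d0 oppr0.
  apply: (@one_side p (- d) IH Pp hdN); first by exists j2; rewrite axN oppr_gt0.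
  by move=> j; rewrite axN oppr_ge0.
have [[j2 hj2]|nneg] := pselect (exists j, ax j d < 0); last first.
  apply: (@one_side p d IH Pp hd); first by exists j1.
  by move=> j; rewrite leNgt; apply/negP => h; apply: nneg; exists j.
have [s1 [s10 [P1 lt1]]] := @move_ray p d Pp hd (ex_intro _ j1 hj1).
have hj2' : 0 < ax j2 (- d) by rewrite axN oppr_gt0.
have [s2 [s20 [P2 lt2]]] := @move_ray p (- d) Pp hdN (ex_intro _ j2 hj2').
have [x1 [Kx1 Cx1]] := IH _ P1 lt1.
have [x2 [Kx2 Cx2]] := IH _ P2 lt2.
pose lam := s2 / (s1 + s2).
have hl : 0 <= lam <= 1.
  have s12 : 0 < s1 + s2 by rewrite addr_gt0.
  apply/andP; split; first by rewrite divr_ge0 // ltW.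
  by rewrite /lam ler_pdivrMr // mul1r lerDr ltW.
exists (lam *: x1 + (1 - lam) *: x2); split; first exact: K_conv.
have -> : p - (lam *: x1 + (1 - lam) *: x2) =
    lam *: (p + s1 *: d - x1) + (1 - lam) *: (p + s2 *: - d - x2).
  apply/matrixP => i j; rewrite !mxE /lam; field.
  by rewrite gt_eqF // addr_gt0.
exact: C_conv.
Qed.

Definition sq (v : 'cV[R]_n) := \sum_(i < n) v i 0 ^+ 2.
Definition FF p := [set x | KP P x /\ C (p - x)].

Lemma sq_ge0 v : 0 <= sq v.
Proof. by apply: sumr_ge0 => i _; exact: sqr_ge0. Qed.

Lemma enorm_le u v : (enorm u <= enorm v) = (sq u <= sq v).
Proof. by rewrite /enorm ler_sqrt // sq_ge0. Qed.

Lemma sq_cont : continuous sq.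
Proof.
apply: continuous_big => [|i _]; first exact: (@add_continuous R^o).
move=> x; rewrite /GRing.exp /=.
apply: (@continuousM _ _ (fun x : 'cV[R]_n => x i 0) (fun x : 'cV[R]_n => x i 0));
  exact: (@coord_continuous _ n 1 i 0).
Qed.

Lemma FF_compact p : compact (FF p).
Proof.
apply: (subclosed_compact _ K_compact); last by move=> x [].
have -> : FF p = KP P `&` ((fun x => p - x) @^-1` C) by [].
apply: closedI; first exact: K_closed.
apply: preimage_closed; last exact: C_closed.
by move=> x _; apply: continuousB; [exact: cst_continuous | exact: cvg_id].
Qed.

Lemma base_exists p : pointed P -> P p -> exists x, is_base P p x.
Proof.
move=> ptd Pp; have [x0 FFx0] := minkowski ptd p Pp.
have cf : {within FF p, continuous (fun x => sq (p - x))}.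
  have cm : continuous (fun x : 'cV[R]_n => p - x).
    by move=> x; apply: continuousB; [exact: cst_continuous | exact: cvg_id].
  apply: continuous_subspaceT => x.
  exact: (continuous_comp (cm x) (sq_cont _)).
have [c /set_mem [Kc Cc] cmin] := compact_EVT_min (ex_intro _ x0 FFx0) (FF_compact p) cf.
exists c; split => //; split => // y Ky Cy; rewrite enorm_le.
by apply: cmin; apply/mem_set.
Qed.

Lemma sq_sub0 u : sq u = 0 -> u = 0.
Proof.
move=> /eqP; rewrite psumr_eq0; last by move=> i _; exact: sqr_ge0.
move=> /allP h; apply/matrixP => i j; rewrite (ord1 j) mxE.
by have := h i (mem_index_enum _); rewrite sqrf_eq0 => /eqP.
Qed.

Lemma base_unique p x y : is_base P p x -> is_base P p y -> x = y.
Proof.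
move=> [Kx [Cx mx]] [Ky [Cy my]].
pose z := 2^-1 *: x + (1 - 2^-1) *: y.
have h12 : 0 <= (2^-1 : R) <= 1 by rewrite invr_ge0 ler0n /= invf_le1 ?ltr0n // ler1n.
have Kz : KP P z by exact: K_conv.
have Cz : C (p - z).
  have -> : p - z = 2^-1 *: (p - x) + (1 - 2^-1) *: (p - y).
    by apply/matrixP => i j; rewrite !mxE; ring.
  exact: C_conv.
have hxy : sq (p - x) = sq (p - y).
  by apply/eqP; rewrite eq_le -!enorm_le (mx y Ky Cy) (my x Kx Cx).
have hxz := mx _ Kz Cz; rewrite enorm_le in hxz.
have ident : sq (p - z) = (sq (p - x) + sq (p - y)) / 2 - sq (x - y) / 4.
  rewrite /sq -big_split /= !mulr_suml -sumrB; apply: eq_bigr => i _.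
  by rewrite !mxE; field.
move: hxz; rewrite ident -hxy.
have -> : (sq (p - x) + sq (p - x)) / 2 = sq (p - x) by field.
move=> h.
have : sq (x - y) = 0.
  have := sq_ge0 (x - y); set s := sq (x - y) in h * => s0.
  by apply/eqP; rewrite eq_le s0 andbT; lra.
by move/sq_sub0/eqP; rewrite subr_eq0 => /eqP.
Qed.

Lemma base_spec p : pointed P -> P p -> is_base P p (base P p).
Proof. by move=> ptd Pp; apply: xgetPex; exact: base_exists. Qed.

Lemma base_min p y : pointed P -> P p -> FF p y -> sq (p - base P p) <= sq (p - y).
Proof.
move=> ptd Pp [Ky Cy]; have [_ [_ h]] := base_spec p ptd Pp.
by rewrite -enorm_le; exact: h.
Qed.

Lemma ax_le i d : ax i d <= (\sum_j `|A i j|) * `|d|.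
Proof.
rewrite /ax mxE mulr_suml; apply: ler_sum => j _.
apply: le_trans (ler_norm _) _; rewrite normrM ler_wpM2l //; exact: entry_le_norm.
Qed.

Lemma Mb_ge0 : 0 <= Mb.
Proof. by apply: sumr_ge0 => j _. Qed.

Lemma lsc p : pointed P -> P p -> forall e, 0 < e -> exists2 eta, 0 < eta &
  forall q, P q -> `|q - p| < eta -> exists y, FF q y /\ `|y - base P p| < e.
Proof.
move=> ptd Pp e e0.
set x0 := base P p; have [Kx0 [Cx0 _]] := base_spec p ptd Pp.
pose al i := \sum_j `|A i j|.
pose c i := if ax i p == b i 0 then 0 else al i.
have h1 : forall i, 0 <= b i 0 - ax i p by move=> i; rewrite subr_ge0; exact: Pp.
have h2 : forall i, 0 < c i -> 0 < b i 0 - ax i p.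
  move=> i; rewrite /c; case: eqP => [_|ne _]; first by rewrite ltxx.
  by rewrite subr_gt0 lt_neqAle (Pp i) andbT; apply/eqP => e'; apply: ne.
have [dl dl0 [_ hdl]] := @small_t _ c _ h1 h2.
pose D := 2 * Mb.
have D0 : 0 <= D by rewrite mulr_ge0 // Mb_ge0.
have D10 : 0 < D + 1 by rewrite ltr_wpDl.
exists (Num.min dl (e * dl / (D + 1))); first by rewrite lt_min dl0 /= divr_gt0 // mulr_gt0.
move=> q Pq; rewrite lt_min => /andP[hq1 hq2].
have [->|dne] := eqVneq q p.
  by exists x0; split; [exact: (conj Kx0 Cx0) | rewrite subrr normr0].
set d := q - p.
have nd : 0 < `|d| by rewrite normr_gt0 subr_eq0.
pose t := dl / `|d|; pose r := p + t *: d.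
have t0 : 0 < t by rewrite divr_gt0.
have Pr : P r.
  move=> i; rewrite -/(ax i _) axD axZ.
  have [hi|hi] := leP (ax i d) 0.
    by apply: le_trans (Pp i); rewrite -/(ax i p) gerDl mulr_ge0_le0 // ltW.
  have inact_i : ax i p != b i 0.
    apply/eqP => e'; have := Pq i; rewrite -/(ax i q).
    have -> : ax i q = ax i p + ax i d by rewrite /d axB addrC subrK.
    by rewrite e' gerDl leNgt hi.
  rewrite -lerBrDl; apply: le_trans (hdl i); rewrite /c (negbTE inact_i).
  apply: le_trans (ler_wpM2l (ltW t0) (ax_le i d)) _.
  by rewrite /t /al mulrCA divfK ?gt_eqF // mulrC.
have [yr [Kyr Cyr]] := minkowski ptd r Pr.
pose s := `|d| / dl.
have s01 : 0 <= s <= 1.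
  apply/andP; split; first by rewrite /s divr_ge0 // ltW.
  by rewrite /s ler_pdivrMr // mul1r ltW.
exists (s *: yr + (1 - s) *: x0); split.
  split; first exact: K_conv.
  have -> : q - (s *: yr + (1 - s) *: x0) = s *: (r - yr) + (1 - s) *: (p - x0).
    apply/matrixP => i j; rewrite /r /t /s /d !mxE; field.
    by rewrite gt_eqF // gt_eqF.
  exact: C_conv.
have -> : s *: yr + (1 - s) *: x0 - x0 = s *: (yr - x0).
  by apply/matrixP => i j; rewrite !mxE; ring.
rewrite normrZ ger0_norm; last by case/andP: s01.
have hy : `|yr - x0| <= D.
  apply: le_trans (ler_normB _ _) _; rewrite /D mulr2n mulrDl mul1r.
  by rewrite lerD // K_bound.
apply: le_lt_trans (ler_wpM2l _ hy) _; first by case/andP: s01.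
have hd : `|d| * (D + 1) < e * dl by rewrite -ltr_pdivlMr.
rewrite /s mulrAC ltr_pdivrMr //.
by apply: le_lt_trans hd; rewrite mulrDr mulr1 lerDl.
Qed.

Lemma base_cont p : pointed P -> P p -> base P @ within P (nbhs p) --> base P p.
Proof.
move=> ptd Pp.
set x0 := base P p.
have PF : ProperFilter (within P (nbhs p)).
  by rewrite nbhs_subspace_in //; exact: nbhs_subspace_filter.
apply: (@cluster_sub_cvg _ x0 _ (KP P)).
- exact: norm_hausdorff.
- exact: K_compact.
- apply: (@filterS _ (within P (nbhs p)) _ P); last exact: withinT.
  by move=> q Pq; case: (base_spec q ptd Pq).
move=> z clz.
have approx eta : 0 < eta ->
    exists q, P q /\ `|q - p| < eta /\ `|z - base P q| < eta.
  move=> eta0.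
  pose A0 := [set x | exists q, P q /\ `|q - p| < eta /\ x = base P q].
  have FA : (base P @ within P (nbhs p)) A0.
    apply/nbhs_ballP; exists eta => // q hq Pq; exists q; split => //.
    by split => //; move: hq; rewrite -ball_normE /= distrC.
  have [x [[q [Pq [hq ->]]] hb]] := clz _ _ FA (nbhsx_ballx z _ eta0).
  exists q; split => //; split => //.
  by move: hb; rewrite -ball_normE.
have Kz : KP P z.
  apply: K_closed => B /nbhs_ballP [eta eta0 hB].
  have [q [Pq [_ hz]]] := approx _ eta0.
  exists (base P q); split; first by case: (base_spec q ptd Pq).
  by apply: hB; rewrite -ball_normE.
have Cz : C (p - z).
  apply: C_closed => B /nbhs_ballP [eta eta0 hB].
  have eta2 : 0 < eta / 2 by rewrite divr_gt0.
  have [q [Pq [hq hz]]] := approx _ eta2.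
  exists (q - base P q); split; first by case: (base_spec q ptd Pq) => _ [].
  apply: hB; rewrite -ball_normE /=.
  have -> : p - z - (q - base P q) = - (q - p) + (base P q - z).
    by apply/matrixP => i j; rewrite !mxE; ring.
  apply: le_lt_trans (ler_normD _ _) _; rewrite normrN.
  by rewrite [`|base P q - z|]distrC (splitr eta) ltrD.
have Hmin : sq (p - z) <= sq (p - x0).
  apply/ler_addgt0Pr => e e0.
  have e2 : 0 < e / 2 by rewrite divr_gt0.
  have [d1 d10 hd1] := @cont_eps _ _ sq (p - z) (e / 2) sq_cont e2.
  have [d2 d20 hd2] := @cont_eps _ _ sq (p - x0) (e / 2) sq_cont e2.
  have d22 : 0 < d2 / 2 by rewrite divr_gt0.
  have [eta eta0 heta] := lsc p ptd Pp (d2 / 2) d22.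
  pose g := Num.min (d1 / 2) (Num.min eta (d2 / 2)).
  have g0 : 0 < g by rewrite !lt_min divr_gt0 //= eta0 divr_gt0.
  have [q [Pq [hq hz]]] := approx _ g0.
  have hg1 : g <= d1 / 2 by rewrite ge_min lexx.
  have hg2 : g <= eta by rewrite !ge_min lexx orbT.
  have hg3 : g <= d2 / 2 by rewrite !ge_min lexx !orbT.
  have [y [FFy hy]] := heta q Pq (lt_le_trans hq hg2).
  have A1 : `|sq (q - base P q) - sq (p - z)| < e / 2.
    apply: hd1.
    have -> : q - base P q - (p - z) = (q - p) + (z - base P q).
      by apply/matrixP => i j; rewrite !mxE; ring.
    apply: le_lt_trans (ler_normD _ _) _; rewrite (splitr d1) ltrD //.
      exact: lt_le_trans hq hg1.
    exact: lt_le_trans hz hg1.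
  have A2 := base_min q y ptd Pq FFy.
  have A3 : `|sq (q - y) - sq (p - x0)| < e / 2.
    apply: hd2.
    have -> : q - y - (p - x0) = (q - p) - (y - x0).
      by apply/matrixP => i j; rewrite !mxE; ring.
    apply: le_lt_trans (ler_normB _ _) _; rewrite (splitr d2) ltrD //.
    exact: lt_le_trans hq hg3.
  move: A1 A3 => /ltr_normlP [h1 h2] /ltr_normlP [h3 h4].
  lra.
apply: (@base_unique p z x0); last exact: base_spec.
split => //; split => // y Ky Cy; rewrite enorm_le.
by apply: le_trans Hmin _; apply: base_min.
Qed.

End Basics.

Theorem mainTheorem10 (R : realType) (n : nat) (P : set 'cV[R]_n) :
  polyhedral P -> pointed P -> full_dim P ->
  {within P, continuous (base P)}.
Proof.
move=> [m [A [b ->]]] ptd _.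
apply/subspace_continuousP => p Pp.
exact: base_cont.
Qed.
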